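(* Let $u\in\mathcal B$ and let $R'(u)=\sum_{n=0}^\infty R'_n[u]$ be the (formal) generating function, where $R'_n[u]=R'[u,\dots,u]$ ($n$ arguments). Then for every $v\in\mathcal B$, $R'(u)v=v+R'(u)\big(\gamma[u\,R'(u)(u)]\,v\big)+R'(u)\big(\Lambda(u\otimes v)\big)$, as an identity of formal series (i.e. comparing the terms of each homogeneous degree in $u$).
   Context: Let $\mathcal B$ be a unital $*$-algebra with star-linear maps $\gamma:\mathcal B\to\mathcal B$ and $\Lambda:\mathcal B\otimes_{alg}\mathcal B\to\mathcal B$. The linear operators $R'[u_1,\dots,u_k]$ on $\mathcal B$ ($k\ge0$) are defined recursively: $R'[\emptyset]=\mathrm{id}_{\mathcal B}$, and $R'[u_1,\dots,u_k]=\sum_{\pi\in\mathrm{Int}(k)}w(V_1)\circ\cdots\circ w(V_m)$, where $\mathrm{Int}(k)$ is the set of interval partitions of $\{1,\dots,k\}$, $V_1,\dots,V_m$ are the blocks of $\pi$ from left to right, $w(\{i\})$ is $v\mapsto\Lambda(u_i\otimes v)$, and for a block $V=\{p,\dots,q\}$ with $q>p$, $w(V)$ is left multiplication by $\gamma\big[u_p\,R'[u_{p+1},\dots,u_{q-1}](u_q)\big]$. *)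

(* Defs.v *)
From HB Require Import structures.
From mathcomp Require Import all_boot all_order all_algebra all_field.
Set Implicit Arguments. Unset Strict Implicit. Unset Printing Implicit Defensive.
Import Order.TTheory GRing.Theory Num.Theory.
Local Open Scope ring_scope.

(* Interval partitions of {1,...,k} are encoded as compositions of k:
   the sequence of block sizes (all positive, summing to k), blocks listed
   from left to right.  [comps_aux f k] enumerates them (f is fuel >= k). *)
Fixpoint comps_aux (f k : nat) : seq (seq nat) :=
  match f with
  | 0 => if k == 0%N then [:: [::]] else [::]
  | f'.+1 =>
      if k == 0%N then [:: [::]]
      else flatten [seq [seq j.+1 :: c | c <- comps_aux f' (k - j.+1)] | j <- iota 0 k]
  end.

Definition interval_partitions (k : nat) : seq (seq nat) := comps_aux k k.

Fixpoint blocks_of {T : Type} (sizes : seq nat) (l : seq T) : seq (seq T) :=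
  match sizes with
  | [::] => [::]
  | j :: s => take j l :: blocks_of s (drop j l)
  end.

Section Rprime.
Variable B : algType algC.
Variable gamma : B -> B.
Variable Lambda : B -> B -> B. (* Lambda x y stands for Lambda (x \otimes y) *)

(* Fuel-based definition; the fuel (size l).+1 is always sufficient. *)
Fixpoint Rp_fuel (f : nat) (l : seq B) : B -> B :=
  match f with
  | 0 => id
  | f'.+1 =>
      let w (blk : seq B) : B -> B :=
        match blk with
        | [::] => id (* never happens: blocks are nonempty *)
        | [:: x] => fun v => Lambda x v
        | x :: y :: t =>
            fun v => gamma (x * Rp_fuel f' (belast y t) (last y t)) * v
        end in
      fun v => \sum_(c <- interval_partitions (size l))
                 (foldr (fun blk g => w blk \o g) id (blocks_of c l)) v
  end.

Definition Rp (l : seq B) : B -> B := Rp_fuel (size l).+1 l.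

Definition Rpn (n : nat) (u : B) : B -> B := Rp (nseq n u).
End Rprime.

(* Main.v *)
Require Import Defs.
From HB Require Import structures.
From mathcomp Require Import all_boot all_order all_algebra all_field zify.
Import Order.TTheory GRing.Theory Num.Theory.
Local Open Scope ring_scope.

Lemma tri (V : nmodType) (f : nat -> nat -> V) n :
  \sum_(j < n) \sum_(i < n - j) f i j = \sum_(i < n) \sum_(j < n - i) f i j.
Proof.
have E : forall (g : nat -> nat -> V), \sum_(j < n) \sum_(i < n - j) g i j =
   \sum_(j < n) \sum_(i < n | (i + j < n)%N) g i j.
  move=> g; apply: eq_bigr => j _.
  rewrite (big_ord_widen n (g^~ j)) ?leq_subr //.
  by apply: eq_bigl => i; rewrite ltn_subRL addnC.
rewrite E. rewrite (exchange_big_dep xpredT) //=. rewrite (E (fun i j => f j i)) /=.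
by apply: eq_bigr => i _; apply: eq_bigl => j; rewrite addnC.
Qed.

Lemma abstract_rev (V : nmodType) (W F : nat -> V -> V)
  (Wadd : forall j x y, W j (x + y) = W j x + W j y) (W0 : forall j, W j 0 = 0)
  (F0 : forall v, F 0%N v = v)
  (FS : forall n v, F n.+1 v = \sum_(j < n.+1) W j (F (n - j)%N v)) :
  forall n v, F n.+1 v = \sum_(i < n.+1) F (n - i)%N (W i v).
Proof.
elim/ltn_ind => n IH v.
rewrite FS big_ord_recr /= subnn F0 [in RHS]big_ord_recr /= subnn F0.
congr (_ + _).
have -> : \sum_(i < n) W i (F (n - i)%N v) =
   \sum_(i < n) \sum_(k < n - i) W i (F (n.-1 - i - k)%N (W k v)).
  apply: eq_bigr => i _.
  have hi : (n - i = (n.-1 - i).+1)%N by have := ltn_ord i; clear; lia.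
  rewrite hi IH; last by have := ltn_ord i; clear; lia.
  rewrite (big_morph (W i) (Wadd i) (W0 i)) -hi.
  by apply: eq_bigr => k _; congr (W _ (F _ _)); have := ltn_ord i; clear; lia.
rewrite (@tri _ (fun k i => W i (F (n.-1 - i - k)%N (W k v)))); apply: eq_bigr => i _.
have hi : (n - i = (n.-1 - i).+1)%N by have := ltn_ord i; clear; lia.
rewrite hi FS; apply: eq_bigr => k _; congr (W _ (F _ _)).
by have := ltn_ord i; clear; lia.
Qed.
Section S.
Variable B : algType algC.
Variable gamma : B -> B.
Variable Lambda : B -> B -> B.

Definition wd (f : nat) (blk : seq B) : B -> B :=
  match blk with
  | [::] => id
  | [:: x] => fun v => Lambda x v
  | x :: y :: t => fun v => gamma (x * Rp_fuel gamma Lambda f (belast y t) (last y t)) * v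
  end.

Definition fw f (bs : seq (seq B)) : B -> B := foldr (fun blk g => wd f blk \o g) id bs.

Lemma Rp_fuelS f l v : Rp_fuel gamma Lambda f.+1 l v =
  \sum_(c <- interval_partitions (size l)) fw f (blocks_of c l) v.
Proof. by []. Qed.

Lemma blocks_size (c : seq nat) (l : seq B) : all (fun b => size b <= size l)%N (blocks_of c l).
Proof.
elim: c l => //= j c IH l; rewrite size_take geq_minr /=.
apply: sub_all (IH (drop j l)) => b /= h; apply: leq_trans h _; by rewrite size_drop leq_subr.
Qed.

Lemma fuel_eq f : forall g l, (size l < f)%N -> (size l < g)%N ->
  Rp_fuel gamma Lambda f l =1 Rp_fuel gamma Lambda g l.
Proof.
elim: f => [|f IH] [|g] l //= hf hg v.
rewrite -/(fw f) -/(fw g).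
apply: eq_bigr => c _.
have := blocks_size c l; elim: (blocks_of c l) => //= b bs IHb /andP [hb hbs].
rewrite /fw /= -/(fw f) -/(fw g) IHb //.
case: b hb => [|x [|y t]] //= hb.
rewrite (IH g) //; rewrite size_belast; have := size l; clear -hb hf hg; lia.
Qed.

Lemma compsS f k : comps_aux f.+1 k.+1 =
  flatten [seq [seq j.+1 :: c | c <- comps_aux f (k.+1 - j.+1)] | j <- iota 0 k.+1].
Proof. by []. Qed.

Lemma comps_fuel f : forall k, (k <= f)%N -> comps_aux f k = comps_aux f.+1 k.
Proof.
elim: f => [|f IH] [|k] // hk; rewrite compsS [RHS]compsS.
congr flatten; apply/eq_in_map => j; rewrite mem_iota => /andP [_ hj].
by rewrite IH //; clear -hj hk; lia.
Qed.

Lemma comps_fuel' f k : (k <= f)%N -> comps_aux f k = interval_partitions k.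
Proof.
move=> h; rewrite /interval_partitions; elim: f h => [|f IH] h.
  by move: h; rewrite leqn0 => /eqP ->.
case: (ltnP k f.+1) => h'.
  by rewrite -comps_fuel // IH.
by have -> : k = f.+1 by apply/eqP; rewrite eqn_leq h h'.
Qed.


Lemma fw_eq f g bs : all (fun b => (size b <= f.+1)%N && (size b <= g.+1)%N) bs ->
  fw f bs =1 fw g bs.
Proof.
elim: bs => //= b bs IHb /andP [/andP [h1 h2] hbs] v.
rewrite /= IHb //.
case: b h1 h2 => [|x [|y t]] //= h1 h2.
rewrite (fuel_eq _ g) // size_belast; clear -h1 h2; lia.
Qed.

Lemma belast_nseq (u : B) b : belast u (nseq b u) = nseq b u.
Proof. by elim: b => //= b ->. Qed.

Lemma last_nseq' (u : B) b : last u (nseq b u) = u.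
Proof. by elim: b. Qed.

Definition Wfin (u : B) (j : nat) (v : B) : B :=
  if j is b.+1 then gamma (u * Rpn gamma Lambda b u u) * v else Lambda u v.

Lemma wd_nseq u n j v : (j <= n)%N -> wd n.+1 (nseq j.+1 u) v = Wfin u j v.
Proof.
case: j => [|b] // hb.
change (gamma (u * Rp_fuel gamma Lambda n.+1 (belast u (nseq b u)) (last u (nseq b u))) * v = Wfin u b.+1 v).
rewrite belast_nseq last_nseq' /Wfin /Rpn /Rp size_nseq (fuel_eq n.+1 b.+1) // size_nseq //; lia.
Qed.

Lemma Rpn_S (Wadd : forall u j x y, Wfin u j (x + y) = Wfin u j x + Wfin u j y)
  (W0 : forall u j, Wfin u j 0 = 0) u n v :
  Rpn gamma Lambda n.+1 u v = \sum_(j < n.+1) Wfin u j (Rpn gamma Lambda (n - j) u v).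
Proof.
rewrite /Rpn /Rp [LHS]Rp_fuelS size_nseq /interval_partitions compsS big_flatten big_map.
rewrite -(big_mkord xpredT (fun j => Wfin u j (Rp_fuel gamma Lambda (size (nseq (n - j) u)).+1 (nseq (n - j) u) v))) /index_iota subn0.
apply: eq_big_seq => j; rewrite mem_iota add0n => /andP [_ hj].
rewrite big_map subSS comps_fuel' ?leq_subr //.
rewrite Rp_fuelS size_nseq (big_morph (Wfin u j) (Wadd u j) (W0 u j)).
apply: eq_bigr => c _.
change (wd n.+1 (take j.+1 (nseq n.+1 u)) (fw n.+1 (blocks_of c (drop j.+1 (nseq n.+1 u))) v) = Wfin u j (fw (n - j) (blocks_of c (nseq (n - j) u)) v)).
rewrite take_nseq // drop_nseq subSS wd_nseq //.
congr Wfin.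
apply: fw_eq.
apply: sub_all (blocks_size c (nseq (n - j) u)) => b /=; rewrite size_nseq => h.
apply/andP; split; apply: leq_trans h _; clear; lia.
Qed.

End S.

Theorem theorem3p13
  (B : algType algC)
  (star : B -> B)
  (star_add : forall x y : B, star (x + y) = star x + star y)
  (star_scale : forall (c : algC) (x : B), star (c *: x) = c^* *: star x)
  (star_mul : forall x y : B, star (x * y) = star y * star x)
  (star_invol : forall x : B, star (star x) = x)
  (gamma : B -> B)
  (gamma_lin : linear gamma)
  (gamma_star : forall x : B, gamma (star x) = star (gamma x))
  (Lambda : B -> B -> B)
  (Lambda_lin1 : forall y : B, linear (fun x => Lambda x y))
  (Lambda_lin2 : forall x : B, linear (Lambda x))
  (Lambda_star : forall x y : B, Lambda (star x) (star y) = star (Lambda x y))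
  (u v : B) (n : nat) :
  Rpn gamma Lambda n u v =
    (if n == 0%N then v else 0)
    + \sum_(b < n.-1)
        Rpn gamma Lambda (n.-2 - b) u
          (gamma (u * Rpn gamma Lambda b u u) * v)
    + (if n is m.+1 then Rpn gamma Lambda m u (Lambda u v) else 0).
Proof.
have LD : forall x y z, Lambda x (y + z) = Lambda x y + Lambda x z.
  by move=> x y z; have := Lambda_lin2 x 1 y z; rewrite !scale1r.
have L0 : forall x, Lambda x 0 = 0.
  move=> x; have h := LD x 0 0; rewrite addr0 in h.
  by apply: (@addrI _ (Lambda x 0)); rewrite addr0 -h.
have Wadd : forall u j x y, Wfin B gamma Lambda u j (x + y) = Wfin B gamma Lambda u j x + Wfin B gamma Lambda u j y.
  by move=> w [|j] x y /=; rewrite ?LD ?mulrDr.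
have W0 : forall u j, Wfin B gamma Lambda u j 0 = 0.
  by move=> w [|j] /=; rewrite ?L0 ?mulr0.
case: n => [|m].
  by rewrite /= big_ord0 addr0 /Rpn /Rp /= big_cons big_nil addr0.
rewrite /= add0r.
rewrite (@abstract_rev B (Wfin B gamma Lambda u) (fun k => Rpn gamma Lambda k u) (Wadd u) (W0 u)).
- rewrite big_ord_recl /= subn0 addrC; congr (_ + _).
  by apply: eq_bigr => i _; congr (Rpn _ _ _ _ _); rewrite /bump /=; lia.
- by move=> w; rewrite /Rpn /Rp /= big_cons big_nil addr0.
- by move=> k w; apply: Rpn_S.
Qed.
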